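(* Let $A$ be an $(n-2)\times n$ integer matrix of rank $n-2$ with columns $a_1,\dots,a_n$ such that some $w\in\mathbb Q^{n-2}$ satisfies $w\cdot a_i=1$ for all $i$, and let $B=(b_{i\ell})$ be an $n\times2$ integer matrix whose columns form a $\mathbb Z$-basis of $\ker_{\mathbb Z}(A)$. Define the dual full discriminant $\tilde E_B(x_1,\dots,x_n)=\tilde{\mathcal C}_B(b_{i\ell}x_i,\ i=1,\dots,n,\ \ell=1,2)$, i.e. the dual Chow form evaluated at $y_{i\ell}=b_{i\ell}x_i$. Then $\tilde E_B$ has no monomial factors: no variable $x_i$ divides $\tilde E_B$.
   Context: $X_B\subset\mathbf P^{n-1}$ is the codimension-2 toric variety defined by the ideal $I_B\subset k[x_1,\dots,x_n]$ ($k$ of characteristic zero) generated by all binomials $x^{u_+}-x^{u_-}$ with $u=u_+-u_-\in\ker_{\mathbb Z}(A)$. With $Y=(y_{i\ell})$ an $n\times 2$ matrix of indeterminates, the dual Chow form $\tilde{\mathcal C}_B\in\mathbb Z[y_{i\ell}]$ is the irreducible polynomial (unique up to sign) vanishing exactly when the line $\{(y_{11}+ty_{12}:\cdots:y_{n1}+ty_{n2})\}$ meets $X_B$. *)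

(* Defs.v *)
From HB Require Import structures.
From mathcomp Require Import all_boot all_order all_algebra.
From mathcomp Require Import algC.
From mathcomp Require Import mpoly.
Set Implicit Arguments. Unset Strict Implicit. Unset Printing Implicit Defensive.
Import Order.TTheory GRing.Theory Num.Theory.
Local Open Scope ring_scope.

Definition zpos (z : int) : nat := if (0 <= z)%R then absz z else 0%N.
Definition zneg (z : int) : nat := if (z < 0)%R then absz z else 0%N.

Definition in_kerZ (m n : nat) (A : 'M[int]_(m, n)) (u : 'cV[int]_n) : Prop :=
  A *m u = 0.

Definition good_A (m : nat) (A : 'M[int]_(m, m.+2)) : Prop :=
  \rank (map_mx (intr : int -> rat) A) = m /\
  exists w : 'rV[rat]_m, w *m map_mx (intr : int -> rat) A = const_mx 1.

Definition Zbasis_ker (m n : nat) (A : 'M[int]_(m, n)) (B : 'M[int]_(n, 2)) : Prop :=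
  A *m B = 0 /\
  (forall u : 'cV[int]_n, in_kerZ A u -> exists c : 'cV[int]_2, u = B *m c) /\
  (forall c : 'cV[int]_2, B *m c = 0 -> c = 0).

(* p (a point of k^n, k = algC) lies in the affine cone over X_B, i.e. all
   binomials x^{u+} - x^{u-}, u in ker_Z(A), generating I_B vanish at p. *)
Definition in_cone_XB (m n : nat) (A : 'M[int]_(m, n)) (p : 'I_n -> algC) : Prop :=
  forall u : 'cV[int]_n, in_kerZ A u ->
    \prod_(i < n) p i ^+ zpos (u i 0) = \prod_(i < n) p i ^+ zneg (u i 0).

Definition line_meets_XB (m n : nat) (A : 'M[int]_(m, n)) (Y : 'M[algC]_(n, 2)) : Prop :=
  exists s t : algC, (s != 0 \/ t != 0) /\
    in_cone_XB A (fun i => s * Y i 0 + t * Y i 1).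

(* Variables y_{i l} of Z[y_{il}] are indexed by 'I_(n + n):
   y_{i,1} = lshift n i, y_{i,2} = rshift n i. *)
Definition yval (n : nat) (Y : 'I_n -> 'I_2 -> algC) (k : 'I_(n + n)) : algC :=
  match split k with inl i => Y i 0 | inr i => Y i 1 end.

Definition irreducible_mpoly (N : nat) (C : {mpoly int[N]}) : Prop :=
  C != 0 /\ C \isn't a GRing.unit /\
  forall f g : {mpoly int[N]}, C = f * g -> f \is a GRing.unit \/ g \is a GRing.unit.

Definition dual_chow_form (m n : nat) (A : 'M[int]_(m, n)) (C : {mpoly int[n + n]}) : Prop :=
  irreducible_mpoly C /\
  forall Y : 'M[algC]_(n, 2),
    mmap (intr : int -> algC) (yval (fun i l => Y i l)) C = 0 <-> line_meets_XB A Y.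

Definition subst_bx (n : nat) (B : 'M[int]_(n, 2)) (k : 'I_(n + n)) : {mpoly int[n]} :=
  match split k with
  | inl i => (B i 0)%:MP * 'X_i
  | inr i => (B i 1)%:MP * 'X_i
  end.

Definition dual_full_disc (n : nat) (B : 'M[int]_(n, 2)) (C : {mpoly int[n + n]}) : {mpoly int[n]} :=
  mmap (@mpolyC n int) (subst_bx B) C.

(* Main.v *)
Require Import Defs.
From HB Require Import structures.
From mathcomp Require Import all_boot all_order all_algebra.
From mathcomp Require Import algC.
From mathcomp Require Import mpoly.
From mathcomp Require Import zify.
Import Order.TTheory GRing.Theory Num.Theory.
Local Open Scope ring_scope.

Definition v2 (a b : int) : 'cV[int]_2 := \col_(k < 2) (if k == ord0 then a else b).

Lemma Bv2 n (B : 'M[int]_(n,2)) l a b : (B *m v2 a b) l 0 = B l 0 * a + B l 1 * b.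
Proof. by rewrite !mxE big_ord_recl big_ord1 !mxE /=; congr (B l _ * a + B l _ * b); apply: val_inj. Qed.

Lemma Bmul n (B : 'M[int]_(n,2)) (d : 'cV[int]_2) l : (B *m d) l 0 = B l 0 * d 0 0 + B l 1 * d 1 0.
Proof. by rewrite !mxE big_ord_recl big_ord1 /=; congr (B l _ * _ + B l _ * d _ 0); apply: val_inj. Qed.

Lemma zposneg (z : int) : z = (zpos z)%:Z - (zneg z)%:Z.
Proof. case: z => [k|k]; rewrite /zpos /zneg /=; lia. Qed.

Lemma zpos_gt0 (z : int) : 0 < z -> (0 < zpos z)%N.
Proof. by case: z => [k|k] //=; rewrite /zpos /=; case: k. Qed.

Lemma zneg_gt0 (z : int) : (0 < zneg z)%N -> z < 0.
Proof. by case: z => [k|k] //=; rewrite /zneg /=. Qed.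

Lemma zpos0 (z : int) : z = 0 -> zpos z = 0%N /\ zneg z = 0%N.
Proof. by move=> ->. Qed.

Lemma prod_ne n (p : 'I_n -> algC) (u : 'I_n -> int) j : p j = 0 -> 0 < u j ->
  (forall l, u l < 0 -> p l != 0) ->
  \prod_l p l ^+ zpos (u l) != \prod_l p l ^+ zneg (u l).
Proof.
move=> pj uj hl; rewrite (bigD1 j) //= pj expr0n.
have := @zpos_gt0 _ uj; case: (zpos (u j)) => // k _; rewrite mul0r eq_sym.
apply/prodf_neq0 => l _; case E: (zneg (u l)) => [|k']; first by rewrite expr0 oner_neq0.
rewrite expf_neq0 //; apply: hl; apply: zneg_gt0; by rewrite E.
Qed.
From mathcomp Require Import ring lra.

Lemma sum_zpos_zneg n (u : 'I_n -> int) : \sum_l u l = 0 ->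
  (\sum_l zpos (u l) = \sum_l zneg (u l))%N.
Proof.
move=> h; apply/eqP; rewrite -eqz_nat; apply/eqP.
have e: forall F : 'I_n -> nat, ((\sum_l F l)%N : int) = \sum_l (F l)%:Z.
  by move=> F; elim/big_rec2: _ => // l a b _ <-; rewrite PoszD.
have: \sum_l u l = \sum_l ((zpos (u l))%:Z - (zneg (u l))%:Z).
  by apply: eq_bigr => l _; exact: zposneg.
rewrite sumrB h !e => /eqP; rewrite eq_sym subr_eq0 => /eqP ->.
by [].
Qed.

Lemma Bsum_u n (B : 'M[int]_(n,2)) (Bsum : forall k, \sum_l B l k = 0) a b :
  \sum_l (B l 0 * a + B l 1 * b) = 0.
Proof. by rewrite big_split /= -!mulr_suml !Bsum !mul0r addr0. Qed.

Lemma intr_ne0 (z : int) : z != 0 -> (z%:~R : algC) != 0.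
Proof. by rewrite intr_eq0. Qed.

Definition dlt n (B : 'M[int]_(n,2)) k l := B l 0 * - B k 1 + B l 1 * B k 0.
Arguments dlt {n}.

Lemma sq_pos (a b : int) : (a != 0) || (b != 0) -> 0 < a * a + b * b.
Proof.
have H : forall c : int, c != 0 -> 0 < c * c.
  by move=> c hc; rewrite -expr2 lt_neqAle eq_sym sqrf_eq0 hc sqr_ge0.
have G : forall c : int, 0 <= c * c by move=> c; rewrite -expr2 sqr_ge0.
case/orP=> h; have := H _ h; [have := G b | have := G a]; lra.
Qed.

Lemma core (n : nat) (B : 'M[int]_(n,2)) (i : 'I_n)
  (Binj : forall c : 'cV[int]_2, B *m c = 0 -> c = 0)
  (Bsum : forall k, \sum_l B l k = 0) :
  exists x : 'I_n -> algC, x i = 0 /\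
   forall s t : algC, (s != 0 \/ t != 0) ->
    exists d : 'cV[int]_2,
     \prod_l (s * ((B l 0)%:~R * x l) + t * ((B l 1)%:~R * x l)) ^+ zpos ((B *m d) l 0)
     != \prod_l (s * ((B l 0)%:~R * x l) + t * ((B l 1)%:~R * x l)) ^+ zneg ((B *m d) l 0).
Proof.
pose nzr l := (B l 0 != 0) || (B l 1 != 0).
have zrow : forall l a b, ~~ nzr l -> B l 0 * a + B l 1 * b = 0.
  by move=> l a b; rewrite /nzr negb_or !negbK => /andP[/eqP -> /eqP ->]; rewrite !mul0r addr0.
have [j [bj hij]] : exists j, nzr j /\ (j = i \/ ~~ nzr i).
  case: (boolP (nzr i)) => [h|h]; first by exists i; auto.
  case: (pickP nzr) => [j hj|none]; first by exists j; auto.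
  exfalso; have := Binj (v2 1 0).
  have -> : B *m v2 1 0 = 0.
    apply/matrixP => l k; rewrite (ord1 k) Bv2 mxE zrow //; by rewrite none.
  move=> /(_ erefl) /matrixP /(_ 0 0); by rewrite !mxE.
pose w l := B l 0 * - B j 1 + B l 1 * B j 0.
have [l1 wl1] : exists l1, w l1 != 0.
  case: (pickP (fun l => w l != 0)) => [l hl|none]; first by exists l.
  exfalso; have := Binj (v2 (- B j 1) (B j 0)).
  have -> : B *m v2 (- B j 1) (B j 0) = 0.
    apply/matrixP => l k; rewrite (ord1 k) Bv2 mxE; have := none l; rewrite /w.
    by move/negbFE/eqP.
  move=> /(_ erefl) /matrixP H; move: bj; rewrite /nzr.
  have := H 0 0; have := H 1 0; rewrite !mxE /= => -> /eqP; rewrite oppr_eq0 => /eqP ->.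
  by rewrite eqxx.
pose e : int := if 0 < w l1 then 1 else -1.
have ee : e * e = 1 by rewrite /e; case: ifP.
pose d' := v2 (e * - B j 1) (e * B j 0).
pose u' l := (B *m d') l 0.
have u'E : forall l, u' l = e * w l by move=> l; rewrite /u' Bv2 /w; ring.
have u'l1 : 0 < u' l1.
  rewrite u'E /e; case: ifP => h; first by rewrite mul1r.
  by rewrite mulN1r oppr_gt0 lt_neqAle wl1 /= leNgt h.
have hu0 : forall l, (l == i) || (l == j) -> u' l = 0.
  move=> l /orP[] /eqP ->; rewrite u'E /w; last by rewrite -[RHS](mulr0 e); congr (_ * _); ring.
  case: hij => [<-|hi]; first by rewrite -[RHS](mulr0 e); congr (_ * _); ring.
  by rewrite zrow ?mulr0.
have l1ij : ~~ ((l1 == i) || (l1 == j)).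
  by apply/negP => /hu0 h; move: u'l1; rewrite h ltxx.
pose K2 : int := \prod_l u' l ^+ zneg (u' l).
have K2nz : K2 != 0.
  apply/prodf_neq0 => l _; case E: (zneg (u' l)) => [|k]; first by rewrite expr0 oner_neq0.
  rewrite expf_neq0 // ltr0_neq0 //; apply: zneg_gt0; by rewrite E.
pose X : algC := (2 * K2)%:~R.
have Xnz : X != 0 by rewrite intr_eq0 mulf_neq0.
pose x l : algC := if (l == i) || (l == j) then 0 else if l == l1 then X else 1.
have xnz : forall l, ~~ ((l == i) || (l == j)) -> x l != 0.
  by move=> l h; rewrite /x (negbTE h); case: ifP => _ //; rewrite oner_neq0.
exists x; split; first by rewrite /x eqxx.
move=> s t hst.
pose gam l : algC := (B l 0)%:~R * s + (B l 1)%:~R * t.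
have pE : forall l, s * ((B l 0)%:~R * x l) + t * ((B l 1)%:~R * x l) = x l * gam l.
  by move=> l; rewrite /gam; ring.
have xj : x j = 0 by rewrite /x eqxx orbT.
have ident : forall k l, (B k 0)%:~R * gam l = (B l 0)%:~R * gam k + (dlt B k l)%:~R * t
   /\ (B k 1)%:~R * gam l = (B l 1)%:~R * gam k - (dlt B k l)%:~R * s.
  move=> k l; rewrite /gam /dlt !rmorphD !rmorphM /= !rmorphN /=; split; ring.
have dl0 : forall k l, gam k = 0 -> gam l = 0 -> dlt B k l = 0.
  move=> k l gk gl; have [h1 h2] := ident k l; rewrite gl gk !mulr0 add0r sub0r in h1 h2.
  apply/eqP; rewrite -(intr_eq0 algC); case: hst => [sn|tn].
    by move: h2 => /esym/eqP; rewrite oppr_eq0 mulf_eq0 (negbTE sn) orbF.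
  by move: h1 => /esym/eqP; rewrite mulf_eq0 (negbTE tn) orbF.
case: (eqVneq (gam j) 0) => [gj0|gjnz].
  have enz : (e%:~R : algC) != 0 by rewrite intr_eq0 /e; case: ifP.
  have dE : forall l, ((dlt B j l)%:~R : algC) = e%:~R * (u' l)%:~R.
    by move=> l; rewrite -rmorphM /= u'E mulrA ee mul1r.
  have [kap [kapnz gE]] : exists kap : algC, kap != 0 /\ forall l, gam l = kap * (u' l)%:~R.
    move: bj; rewrite /nzr => /orP[] hb.
      exists (t / (B j 0)%:~R * e%:~R); split.
        have tnz : t != 0.
          apply/negP => /eqP t0; move: gj0; rewrite /gam t0 mulr0 addr0 => /eqP.
          rewrite mulf_eq0 intr_eq0 (negbTE hb) /= => s0; move: hst; rewrite (eqP s0) t0 eqxx.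
          by case.
        by rewrite !mulf_neq0 // invr_eq0 intr_eq0.
      move=> l; have [h1 _] := ident j l; rewrite gj0 mulr0 add0r dE in h1.
      have hb' : ((B j 0)%:~R : algC) != 0 by rewrite intr_eq0.
      apply: (mulfI hb'); rewrite h1; field; exact: hb'.
    exists (- s / (B j 1)%:~R * e%:~R); split.
      have snz : s != 0.
        apply/negP => /eqP s0; move: gj0; rewrite /gam s0 mulr0 add0r => /eqP.
        rewrite mulf_eq0 intr_eq0 (negbTE hb) /= => t0; move: hst; rewrite (eqP t0) s0 eqxx.
        by case.
      by rewrite !mulf_neq0 // ?oppr_eq0 // invr_eq0 intr_eq0.
    move=> l; have [_ h2] := ident j l; rewrite gj0 mulr0 add0r dE in h2.
    have hb' : ((B j 1)%:~R : algC) != 0 by rewrite intr_eq0.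
    apply: (mulfI hb'); rewrite h2; field; exact: hb'.
  have zneg0 : forall z : int, 0 <= z -> zneg z = 0%N.
    by move=> z hz; rewrite /zneg ltNge hz.
  exists d'; apply/negP => /eqP H.
  have H1 : \prod_l (x l ^+ zpos (u' l) * (kap ^+ zpos (u' l) * (u' l)%:~R ^+ zpos (u' l)))
          = \prod_l (x l ^+ zneg (u' l) * (kap ^+ zneg (u' l) * (u' l)%:~R ^+ zneg (u' l))).
    move: H; rewrite (eq_bigr (fun l => x l ^+ zpos (u' l) * (kap ^+ zpos (u' l) * (u' l)%:~R ^+ zpos (u' l)))); last first.
      by move=> l _; rewrite pE gE !exprMn.
    rewrite [X in _ = X -> _](eq_bigr (fun l => x l ^+ zneg (u' l) * (kap ^+ zneg (u' l) * (u' l)%:~R ^+ zneg (u' l)))) //.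
    by move=> l _; rewrite pE gE !exprMn.
  move: H1; rewrite !big_split /= !prodrXr.
  rewrite (@sum_zpos_zneg _ u'); last first.
    by rewrite (eq_bigr _ (fun l _ => u'E l)) -mulr_sumr (Bsum_u _ _ Bsum) mulr0.
  have -> : \prod_l x l ^+ zpos (u' l) = X ^+ zpos (u' l1).
    rewrite (bigD1 l1) //= big1 ?mulr1; first by rewrite /x (negbTE l1ij) eqxx.
    move=> l hl; case: (boolP ((l == i) || (l == j))) => h; first by rewrite hu0 // expr0.
    by rewrite /x (negbTE h) (negbTE hl) expr1n.
  have -> : \prod_l x l ^+ zneg (u' l) = 1.
    apply: big1 => l _; case: (boolP ((l == i) || (l == j))) => h; first by rewrite hu0 // expr0.
    case: (eqVneq l l1) => [->|hl]; first by rewrite zneg0 ?expr0 // ltW.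
    by rewrite /x (negbTE h) (negbTE hl) expr1n.
  rewrite mul1r mulrCA => /(mulfI (expf_neq0 _ kapnz)).
  rewrite -!(eq_bigr _ (fun l _ => rmorphXn _ _ _)) -!rmorph_prod /= -rmorphXn -rmorphM /=.
  move/intr_inj; rewrite -/K2.
  have := @zpos_gt0 _ u'l1; case: (zpos (u' l1)) => // a _.
  rewrite exprS -mulrA -mulrA mulrCA; rewrite -[X in _ = X -> _]mulr1 => /(mulfI K2nz).
  lia.
have [d [hdj hdl]] : exists d : 'cV_2, 0 < (B *m d) j 0 /\ forall l, (B *m d) l 0 != 0 -> gam l != 0.
  case: (pickP (fun k => nzr k && (gam k == 0))) => [k /andP[bk /eqP gk] | nok].
    have dj : dlt B k j != 0.
      apply/negP => /eqP dj0; have [h1 h2] := ident k j.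
      rewrite gk dj0 !mulr0 !mul0r addr0 subr0 in h1 h2.
      move: bk; rewrite /nzr => /orP[] h.
        by move: h1 => /eqP; rewrite mulf_eq0 intr_eq0 (negbTE h) (negbTE gjnz).
      by move: h2 => /eqP; rewrite mulf_eq0 intr_eq0 (negbTE h) (negbTE gjnz).
    pose e2 : int := if 0 < dlt B k j then 1 else -1.
    exists (v2 (e2 * - B k 1) (e2 * B k 0)).
    have uE : forall l, (B *m v2 (e2 * - B k 1) (e2 * B k 0)) l 0 = e2 * dlt B k l.
      by move=> l; rewrite Bv2 /dlt; ring.
    split.
      rewrite uE /e2; case: ifP => h; first by rewrite mul1r.
      by rewrite mulN1r oppr_gt0 lt_neqAle dj /= leNgt h.
    move=> l; rewrite uE; apply: contra_neq => gl; by rewrite dl0 // mulr0.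
  exists (v2 (B j 0) (B j 1)); split; first by rewrite Bv2; apply: sq_pos.
  move=> l; case: (boolP (nzr l)) => hl.
    by move=> _; have := nok l; rewrite hl /= => /negbT.
  by rewrite Bv2 zrow // eqxx.
exists d; rewrite (eq_bigr (fun l => (x l * gam l) ^+ zpos ((B *m d) l 0))); last by move=> l _; rewrite pE.
rewrite [X in _ != X](eq_bigr (fun l => (x l * gam l) ^+ zneg ((B *m d) l 0))); last by move=> l _; rewrite pE.
apply: (@prod_ne _ _ _ j) => //; first by rewrite xj mul0r.
move=> l hl; rewrite mulf_neq0 //; last by apply: hdl; rewrite ltr0_neq0.
apply: xnz; apply/negP => /orP[] /eqP el.
  case: hij => [eji|hi].
    by move: hdj hl; rewrite el -eji => /lt_trans h /h; rewrite ltxx.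
  by move: hl; rewrite el Bmul zrow // ltxx.
by move: hdj hl; rewrite el => /lt_trans h /h; rewrite ltxx.
Qed.

Lemma eval_comp (N K : nat) (g : 'I_K -> {mpoly int[N]}) (x : 'I_N -> algC) (p : {mpoly int[K]}) :
  mmap (intr : int -> algC) x (mmap (@mpolyC N int) g p) = mmap (intr : int -> algC) (fun k => mmap (intr : int -> algC) x (g k)) p.
Proof.
have -> : mmap (@mpolyC N int) g p = \sum_(m <- msupp p) (p@_m)%:MP * mmap1 g m by [].
rewrite raddf_sum /= [RHS]/mmap; apply: eq_bigr => mo _.
rewrite rmorphM /= mmapC rmorph_prod /=; congr (_ * _).
by apply: eq_bigr => i _; rewrite rmorphXn.
Qed.

Lemma mmap_ext (N : nat) (h1 h2 : 'I_N -> algC) (p : {mpoly int[N]}) :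
  h1 =1 h2 -> mmap (intr : int -> algC) h1 p = mmap (intr : int -> algC) h2 p.
Proof.
move=> e; rewrite /mmap; apply: eq_bigr => mo _; congr (_ * _); exact: mmap1_eq.
Qed.

Theorem lemma3p3 (m : nat) (A : 'M[int]_(m, m.+2)) (B : 'M[int]_(m.+2, 2))
  (C : {mpoly int[m.+2 + m.+2]}) :
  good_A A -> Zbasis_ker A B -> dual_chow_form A C ->
  forall i : 'I_m.+2,
    ~ (exists q : {mpoly int[m.+2]}, dual_full_disc B C = 'X_i * q).
Proof.
move=> [_ [w hw]] [AB0 [_ Binj]] [_ hC] i [q hq].
have Bsum : forall k, \sum_l B l k = 0.
  move=> k; have := congr1 (fun M => M *m map_mx (intr : int -> rat) B) hw.
  rewrite -mulmxA -map_mxM AB0 map_mx0 mulmx0 => /matrixP /(_ 0 k).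
  rewrite !mxE => /esym/eqP; rewrite (eq_bigr (fun l => (B l k)%:~R)); last first.
    by move=> l _; rewrite !mxE mul1r.
  by rewrite -rmorph_sum intr_eq0 => /eqP.
have [x [xi hx]] := core _ B i Binj Bsum.
pose Y : 'M[algC]_(m.+2, 2) := \matrix_(l, k) ((B l k)%:~R * x l).
have : mmap (intr : int -> algC) (yval (fun i l => Y i l)) C = 0.
  rewrite -(@mmap_ext _ (fun k => mmap (intr : int -> algC) x (subst_bx B k))); last first.
    move=> k; rewrite /subst_bx /yval; case: (split k) => l;
    by rewrite rmorphM /= mmapC mmapX mmap1U mxE.
  rewrite -eval_comp -/(dual_full_disc B C) hq rmorphM /= mmapX mmap1U xi mul0r //.
move/hC => [s [t [hst hin]]].
have [d hd] := hx s t hst.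
move/negP: hd; apply.
have := hin (B *m d); rewrite /in_kerZ mulmxA AB0 mul0mx => /(_ erefl).
rewrite !(eq_bigr _ (fun l _ => congr1 (fun z => z ^+ _) (congr2 (fun a b => s * a + t * b) (mxE _ _ l 0) (mxE _ _ l 1)))).
by move=> ->.
Qed.
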